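(* Assume that each $f_m^j$ is convex and $L$-smooth and that $f$ is $\mu$-strongly convex ($\mu>0$). In the setting described in the context, for every meta-epoch $t$ and every $\theta>0$, $$-2\theta\Big\langle\frac1R\sum_{r=0}^{R-1}\frac1C\sum_{m\in S_t^{\lambda_r}}\frac1N\sum_{j=0}^{N-1}\nabla f_m^{\pi_m^j}(x^{r,j}_{m,t}),\,x_t-x_\star\Big\rangle\le-\frac{\theta\mu}{2}\|x_t-x_\star\|^2-\theta\big(f(x_t)-f(x_\star)\big)+\theta LV_t,$$ where $V_t=\frac{1}{RCN}\sum_{r=0}^{R-1}\sum_{m\in S_t^{\lambda_r}}\sum_{j=0}^{N-1}\|x_t-x^{r,j}_{m,t}\|^2$.
   Context: Setting. There are $M$ clients, each holding $N$ data points. For $m\in[M]$ and $j\in\{0,\dots,N-1\}$, $f_m^j:\mathbb{R}^d\to\mathbb{R}$ is differentiable. Define $f_m=\frac1N\sum_j f_m^j$ and $f=\frac1M\sum_m f_m$, and let $x_\star$ be the minimizer of $f$. $L$-smooth means the gradient is $L$-Lipschitz. $\mu$-strong convexity means $\langle\nabla h(x),y-x\rangle\le-(h(x)-h(y)+\frac\mu2\|x-y\|^2)$ for all $x,y$. Algorithm RR-CLI. Let $C$ be a cohort size with $M=CR$, and let $\gamma,\eta>0$. In meta-epoch $t$: - The clients are partitioned into $R$ disjoint cohorts of size $C$, taken in order $S_t^{\lambda_0},\dots,S_t^{\lambda_{R-1}}$. - Each client $m$ has a permutation $\pi_m=(\pi_m^0,\dots,\pi_m^{N-1})$ of its data indices.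 - Set $x_t^0=x_t$. For $r=0,\dots,R-1$ and $m\in S_t^{\lambda_r}$, set $x^{r,0}_{m,t}=x^r_t$ and $x^{r,j+1}_{m,t}=x^{r,j}_{m,t}-\gamma\nabla f_m^{\pi_m^j}(x^{r,j}_{m,t})$ for $j=0,\dots,N-1$. - The server sets $x^{r+1}_t=x^r_t-\eta\frac1C\sum_{m\in S_t^{\lambda_r}}\frac{x^r_t-x^{r,N}_{m,t}}{\gamma N}$. *)

(* Defs.v *)
From mathcomp Require Import all_boot all_algebra all_fingroup.
From mathcomp Require Import all_classical all_reals all_analysis.
Set Implicit Arguments. Unset Strict Implicit. Unset Printing Implicit Defensive.
Import GRing.Theory Num.Theory.
Local Open Scope ring_scope.

Section Defs.
Variables (K : realType) (d : nat).
Notation vec := 'rV[K]_d.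

Definition dotv (u v : vec) : K := \sum_(i < d) u 0 i * v 0 i.
Definition sqnorm (u : vec) : K := dotv u u.
Definition norm2 (u : vec) : K := Num.sqrt (sqnorm u).

Definition grad (h : vec -> K) (x : vec) : vec :=
  \row_i derive h x (delta_mx 0 i).

Definition L_smooth (L : K) (h : vec -> K) : Prop :=
  forall x y, norm2 (grad h x - grad h y) <= L * norm2 (x - y).

Definition convex_fun (h : vec -> K) : Prop :=
  forall (x y : vec) (a : K), 0 <= a -> a <= 1 ->
    h (a *: x + (1 - a) *: y) <= a * h x + (1 - a) * h y.

Definition strongly_convex (mu : K) (h : vec -> K) : Prop :=
  forall x y, dotv (grad h x) (y - x) <= - (h x - h y + mu / 2 * sqnorm (x - y)).

Variables (M N : nat).

Definition fclient (fs : 'I_M -> 'I_N -> vec -> K) (m : 'I_M) (x : vec) : K :=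
  (N%:R)^-1 * \sum_(j < N) fs m j x.
Definition fglob (fs : 'I_M -> 'I_N -> vec -> K) (x : vec) : K :=
  (M%:R)^-1 * \sum_(m < M) fclient fs m x.

(* local iterate x^{r,j}_{m}: j local RR steps from x0 along permutation pi *)
Definition loc_iter (gamma : K) (fs : 'I_M -> 'I_N -> vec -> K)
    (pi : {perm 'I_N}) (m : 'I_M) (x0 : vec) (j : nat) : vec :=
  foldl (fun x i => x - gamma *: grad (fs m (pi i)) x) x0 (take j (enum 'I_N)).

Variable C : nat.

(* server iterates x^r_t within one meta-epoch, with cohort S^{lambda_r} listed
   as (coh r c)_{c < C} and permutations pis m *)
Fixpoint server_iter (gamma eta : K) (fs : 'I_M -> 'I_N -> vec -> K)
    (coh : nat -> 'I_C -> 'I_M) (pis : 'I_M -> {perm 'I_N}) (x0 : vec) (r : nat)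
    : vec :=
  match r with
  | 0 => x0
  | r'.+1 =>
      let xr := server_iter gamma eta fs coh pis x0 r' in
      xr - eta *: ((C%:R)^-1 *: \sum_(c < C)
        ((gamma * N%:R)^-1 *: (xr - loc_iter gamma fs (pis (coh r' c)) (coh r' c) xr N)))
  end.

Variable R : nat.

Fixpoint meta_iter (gamma eta : K) (fs : 'I_M -> 'I_N -> vec -> K)
    (coh : nat -> nat -> 'I_C -> 'I_M) (pis : nat -> 'I_M -> {perm 'I_N})
    (x0 : vec) (t : nat) : vec :=
  match t with
  | 0 => x0
  | t'.+1 => server_iter gamma eta fs (coh t') (pis t')
               (meta_iter gamma eta fs coh pis x0 t') R
  end.

End Defs.

(* Main.v *)
Require Import Defs.
From mathcomp Require Import all_boot all_algebra all_fingroup.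
From mathcomp Require Import all_classical all_reals all_analysis.
From mathcomp Require Import ring lra.
Import order.Order.TTheory GRing.Theory Num.Theory.
Local Open Scope ring_scope.

Section S.
Variables (K : realType) (d : nat).
Notation vec := 'rV[K]_d.

Lemma dotvC (u v : vec) : dotv u v = dotv v u.
Proof. by apply: eq_bigr => i _; rewrite mulrC. Qed.
Lemma dotvDl (u v w : vec) : dotv (u + v) w = dotv u w + dotv v w.
Proof. by rewrite /dotv -big_split; apply: eq_bigr => i _; rewrite !mxE mulrDl. Qed.
Lemma dotvZl (c : K) (u w : vec) : dotv (c *: u) w = c * dotv u w.
Proof. by rewrite /dotv mulr_sumr; apply: eq_bigr => i _; rewrite !mxE mulrA. Qed.
Lemma dotvNl (u w : vec) : dotv (- u) w = - dotv u w.
Proof. by rewrite -scaleN1r dotvZl mulN1r. Qed.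
Lemma dotvBl (u v w : vec) : dotv (u - v) w = dotv u w - dotv v w.
Proof. by rewrite dotvDl dotvNl. Qed.
Lemma dotvBr (u v w : vec) : dotv w (u - v) = dotv w u - dotv w v.
Proof. by rewrite dotvC dotvBl !(dotvC w). Qed.
Lemma dotvNr (u w : vec) : dotv w (- u) = - dotv w u.
Proof. by rewrite dotvC dotvNl dotvC. Qed.
Lemma dotvZr (c : K) (u w : vec) : dotv w (c *: u) = c * dotv w u.
Proof. by rewrite dotvC dotvZl dotvC. Qed.
Lemma dotv_suml n (u : 'I_n -> vec) w :
  dotv (\sum_(i < n) u i) w = \sum_(i < n) dotv (u i) w.
Proof.
elim/big_rec2: _ => [|i y1 y2 _ <-]; last by rewrite dotvDl.
by rewrite /dotv big1 // => i _; rewrite mxE mul0r.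
Qed.

Lemma sqnorm_ge0 (u : vec) : 0 <= sqnorm u.
Proof. by apply: sumr_ge0 => i _; rewrite -expr2 sqr_ge0. Qed.

Lemma sqnormE (u : vec) : sqnorm u = norm2 u ^+ 2.
Proof. by rewrite /norm2 sqr_sqrtr // sqnorm_ge0. Qed.

Lemma sqnormN (u v : vec) : sqnorm (u - v) = sqnorm (v - u).
Proof. by rewrite -opprB /sqnorm dotvNl dotvNr opprK. Qed.

Lemma norm2Z (c : K) (u : vec) : norm2 (c *: u) = `|c| * norm2 u.
Proof.
rewrite /norm2 /sqnorm dotvZl dotvZr mulrA -expr2 sqrtrM ?sqr_ge0 //.
by rewrite sqrtr_sqr.
Qed.

Lemma CS2 (a b : vec) : dotv a b ^+ 2 <= sqnorm a * sqnorm b.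
Proof.
have H : 0 <= \sum_(i < d) \sum_(j < d) (a 0 i * b 0 j - a 0 j * b 0 i) ^+ 2.
  by apply: sumr_ge0 => i _; apply: sumr_ge0 => j _; rewrite sqr_ge0.
have E : \sum_(i < d) \sum_(j < d) (a 0 i * b 0 j - a 0 j * b 0 i) ^+ 2 =
  \sum_(i < d) \sum_(j < d) (a 0 i * a 0 i) * (b 0 j * b 0 j)
  + \sum_(i < d) \sum_(j < d) (a 0 j * a 0 j) * (b 0 i * b 0 i)
  - 2 * \sum_(i < d) \sum_(j < d) (a 0 i * b 0 i) * (a 0 j * b 0 j).
  rewrite mulr_sumr -big_split -sumrB /=; apply: eq_bigr => i _.
  rewrite mulr_sumr -big_split -sumrB /=; apply: eq_bigr => j _; ring.
have E1 : \sum_(i < d) \sum_(j < d) (a 0 i * a 0 i) * (b 0 j * b 0 j) = sqnorm a * sqnorm b.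
  by rewrite /sqnorm /dotv mulr_suml; apply: eq_bigr => i _; rewrite mulr_sumr.
have E2 : \sum_(i < d) \sum_(j < d) (a 0 j * a 0 j) * (b 0 i * b 0 i) = sqnorm a * sqnorm b.
  by rewrite exchange_big.
have E3 : \sum_(i < d) \sum_(j < d) (a 0 i * b 0 i) * (a 0 j * b 0 j) = dotv a b ^+ 2.
  by rewrite /dotv expr2 mulr_suml; apply: eq_bigr => i _; rewrite mulr_sumr.
move: H; rewrite E E1 E2 E3; lra.
Qed.

Lemma CS (a b : vec) : dotv a b <= norm2 a * norm2 b.
Proof.
apply: (le_trans (ler_norm _)); rewrite -sqrtr_sqr /norm2 -sqrtrM ?sqnorm_ge0 //.
exact/ler_wsqrtr/CS2.
Qed.

Lemma derive_grad (h : vec -> K) x v : differentiable h x ->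
  derive h x v = dotv (grad h x) v.
Proof.
move=> dh; rewrite deriveE //.
rewrite {1}(matrix_sum_delta v) big_ord1 linear_sum /dotv.
apply: eq_bigr => i _; rewrite linearZ /= mxE -deriveE // mulrC.
done.
Qed.

Lemma derive_right_le (h : vec -> K) x v c : differentiable h x ->
  (\forall s \near (at_right 0), s^-1 *: (h (s *: v + x) - h x) <= c) ->
  dotv (grad h x) v <= c.
Proof.
move=> dh H; rewrite -derive_grad //.
have dv : derivable h x v := diff_derivable dh.
have cv : ((fun s : K => s^-1 *: ((h \o shift x) (s *: v) - h x)) @ (at_right 0) --> derive h x v)%classic.
  rewrite /derive => A /dv /nbhs_ballP [_ /posnumP[e] xe_A].
  by exists e%:num => //= y xe_y; rewrite lt_def => /andP [xney _]; apply: xe_A.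
rewrite -(cvg_lim _ cv) //; apply: limr_le; first exact: cvgP cv.
exact: H.
Qed.

Lemma derive_right_ge (h : vec -> K) x v c : differentiable h x ->
  (\forall s \near (at_right 0), c <= s^-1 *: (h (s *: v + x) - h x)) ->
  c <= dotv (grad h x) v.
Proof.
move=> dh H; rewrite -derive_grad //.
have dv : derivable h x v := diff_derivable dh.
have cv : ((fun s : K => s^-1 *: ((h \o shift x) (s *: v) - h x)) @ (at_right 0) --> derive h x v)%classic.
  rewrite /derive => A /dv /nbhs_ballP [_ /posnumP[e] xe_A].
  by exists e%:num => //= y xe_y; rewrite lt_def => /andP [xney _]; apply: xe_A.
rewrite -(cvg_lim _ cv) //; apply: limr_ge; first exact: cvgP cv.
exact: H.
Qed.

Lemma conv_fo (h : vec -> K) x y : convex_fun h -> differentiable h y ->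
  dotv (grad h y) (x - y) <= h x - h y.
Proof.
move=> hc dh; apply: derive_right_le => //.
near=> s.
have s0 : 0 < s by near: s; exact: nbhs_right_gt.
have s1 : s < 1 by near: s; exact: nbhs_right_lt.
have -> : s *: (x - y) + y = s *: x + (1 - s) *: y.
  by rewrite scalerBr scalerBl scale1r addrA addrAC.
have := hc x y s (ltW s0) (ltW s1).
move=> H.
rewrite /= -[X in _ <= X](mulKf (lt0r_neq0 s0)) ler_pM2l ?invr_gt0 //; lra.
Unshelve. all: by end_near.
Qed.

Lemma min_fo (h : vec -> K) xs (v : vec) : differentiable h xs -> (forall z, h xs <= h z) ->
  0 <= dotv (grad h xs) v.
Proof.
move=> dh hm; apply: derive_right_ge => //.
near=> s.
have s0 : 0 < s by near: s; exact: nbhs_right_gt.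
apply: mulr_ge0; first by rewrite invr_ge0 ltW.
by rewrite subr_ge0; exact: hm.
Unshelve. all: by end_near.
Qed.

Lemma descent (h : vec -> K) L x y : (forall z, differentiable h z) -> L_smooth L h ->
  h x <= h y + dotv (grad h y) (x - y) + L / 2 * sqnorm (x - y).
Proof.
move=> dh hs.
set v := x - y; set A := dotv (grad h y) v; set B := L / 2 * sqnorm v.
pose g (s : K) := h (s *: v + y).
have gd : forall s : K, is_derive s (1 : K) g (dotv (grad h (s *: v + y)) v).
  move=> s; have one : K := 1.
  have e : (fun e : K => e^-1 *: ((g \o shift s) (e *: (1 : K)) - g s)) =
           (fun e : K => e^-1 *: ((h \o shift (s *: v + y)) (e *: v) - h (s *: v + y))).
    apply/funext => e /=; rewrite /g; congr (_ *: (h _ - _)).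
    by rewrite [e *: (1:K)]mulr1 scalerDl addrA.
  have dv : derivable h (s *: v + y) v := diff_derivable (dh _).
  apply: DeriveDef; first by rewrite /derivable e.
  by rewrite -derive_grad // /derive e.
have pd : forall s : K, is_derive s 1 (fun s => s * A + s * s * B) (A + 2 * s * B).
  move=> s; have one : K := 1.
  have := is_deriveD (is_deriveM (is_derive_id s 1) (is_derive_cst A s 1))
     (is_deriveM (is_deriveM (is_derive_id s 1) (is_derive_id s 1)) (is_derive_cst B s 1)).
  move=> H.
  have -> : (fun s => s * A + s * s * B) = (id * cst A + id * id * cst B) by apply/funext.
  apply: (is_derive_eq H).
  rewrite /cst /= !scaler0 !add0r.
  change (A * 1 + B * (s * 1 + s * 1) = A + 2 * s * B); ring.

pose phi := g - (fun s => s * A + s * s * B).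
have phid : forall s : K, is_derive s (1:K) phi
    (dotv (grad h (s *: v + y)) v - (A + 2 * s * B)).
  by move=> s; apply: is_deriveB.
have [c c01 E] := @MVT K phi _ 0 1 ltr01 (fun s _ => phid s)
  (derivable_within_continuous (fun s _ => @ex_derive _ _ _ _ _ _ _ (phid s))).
have c0 : 0 < c by move: c01; rewrite in_itv /= => /andP[].
have E1 : phi 1 = h x - (A + B).
  change (h (1 *: v + y) - (1 * A + 1 * 1 * B) = h x - (A + B)).
  by rewrite scale1r /v subrK !mul1r.
have E0 : phi 0 = h y.
  change (h (0 *: v + y) - (0 * A + 0 * 0 * B) = h y).
  by rewrite scale0r add0r !mul0r addr0 subr0.
have D : dotv (grad h (c *: v + y)) v - (A + 2 * c * B) <= 0.
  have H1 := CS (grad h (c *: v + y) - grad h y) v.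
  have H2 := hs (c *: v + y) y.
  rewrite addrK norm2Z gtr0_norm // in H2.
  have H3 : norm2 (grad h (c *: v + y) - grad h y) * norm2 v <= L * (c * norm2 v) * norm2 v.
    by apply: ler_wpM2r => //; rewrite /norm2 sqrtr_ge0.
  rewrite dotvBl -/A in H1.
  have : B = L / 2 * norm2 v ^+ 2 by rewrite /B sqnormE.
  move: H1 H3; set n := norm2 v; set q := norm2 _; move=> H1 H3 HB.
  rewrite HB.
  have : L * (c * n) * n = 2 * c * (L / 2 * n ^+ 2) by field.
  lra.
move: E; rewrite E1 E0 subr0 mulr1 => E.
lra.
Qed.

Lemma term (h : vec -> K) L xs x y : (forall z, differentiable h z) ->
  convex_fun h -> L_smooth L h ->
  - dotv (grad h y) (x - xs) <= h xs - h x + L / 2 * sqnorm (x - y).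
Proof.
move=> dh hc hs.
have H1 := @conv_fo h xs y hc (dh y).
have H2 := @descent h L x y dh hs.
have : x - xs = (x - y) - (xs - y) by rewrite opprB addrA subrK.
move=> ->; rewrite (dotvBr (x - y) (xs - y)); lra.

Qed.

Lemma triple_le R C N (F G : 'I_R -> 'I_C -> 'I_N -> K) :
  (forall r c j, F r c j <= G r c j) ->
  \sum_(r < R) \sum_(c < C) \sum_(j < N) F r c j <=
  \sum_(r < R) \sum_(c < C) \sum_(j < N) G r c j.
Proof.
by move=> H; do 3 (apply: ler_sum => ? _).
Qed.

End S.

Lemma sum_bij (K : realType) M C R (F : 'I_M -> K) (g : 'I_R -> 'I_C -> 'I_M) :
  M = (C * R)%N -> injective (fun p : 'I_R * 'I_C => g p.1 p.2) ->
  \sum_(r < R) \sum_(c < C) F (g r c) = \sum_(m < M) F m.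
Proof.
move=> HM hinj.
rewrite pair_big /=.
have im : [set g p.1 p.2 | p in [set: 'I_R * 'I_C]] = [set: 'I_M].
  apply/eqP; rewrite eqEcard finset.subsetT /= card_imset // !cardsT card_prod !card_ord HM mulnC.
  by [].
have E1 : \sum_(m < M) F m = \sum_(m in [set: 'I_M]) F m.
  by apply: eq_bigl => m; rewrite finset.in_setT.
rewrite E1 -im big_imset /=; last by move=> p q _ _; apply: hinj.
by apply: eq_bigl => p; rewrite finset.in_setT.
Qed.

Lemma avg_f (K : realType) d M N C R (fs : 'I_M -> 'I_N -> 'rV[K]_d -> K)
  (g : 'I_R -> 'I_C -> 'I_M) (pi : 'I_M -> {perm 'I_N}) z :
  (0 < N)%N -> (0 < C)%N -> (0 < R)%N -> M = (C * R)%N ->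
  injective (fun p : 'I_R * 'I_C => g p.1 p.2) ->
  ((R * C * N)%:R)^-1 * \sum_(r < R) \sum_(c < C) \sum_(j < N)
     fs (g r c) (pi (g r c) j) z = fglob fs z.
Proof.
move=> N0 C0 R0 HM hinj.
have Nn : (N%:R : K) != 0 by rewrite pnatr_eq0 -lt0n.
have Cn : (C%:R : K) != 0 by rewrite pnatr_eq0 -lt0n.
have Rn : (R%:R : K) != 0 by rewrite pnatr_eq0 -lt0n.
have E : forall m, \sum_(j < N) fs m (pi m j) z = N%:R * fclient fs m z.
  move=> m; rewrite /fclient mulrA mulfV // mul1r.
  by rewrite [RHS](reindex_inj (@perm_inj _ (pi m))).
under eq_bigr do under eq_bigr do rewrite E.
under eq_bigr do rewrite -mulr_sumr.
rewrite -mulr_sumr.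
have S := @sum_bij K _ _ _ (fun m => fclient fs m z) _ HM hinj.
rewrite S.
have MM : (M%:R : K) = C%:R * R%:R by rewrite HM natrM.
rewrite /fglob MM !natrM; field.
by rewrite Rn Cn Nn.
Qed.

Lemma triple_lin (K : realType) R C N (F G H : 'I_R -> 'I_C -> 'I_N -> K) :
  \sum_(r < R) \sum_(c < C) \sum_(j < N) (F r c j - G r c j + H r c j) =
  \sum_(r < R) \sum_(c < C) \sum_(j < N) F r c j
  - \sum_(r < R) \sum_(c < C) \sum_(j < N) G r c j
  + \sum_(r < R) \sum_(c < C) \sum_(j < N) H r c j.
Proof.
rewrite -sumrB -big_split; apply: eq_bigr => r _.
rewrite -sumrB -big_split; apply: eq_bigr => c _.
by rewrite -sumrB -big_split.
Qed.

Lemma fglob_diff (K : realType) d M N (fs : 'I_M -> 'I_N -> 'rV[K]_d -> K) x :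
  (forall m j x, differentiable (fs m j) x) -> differentiable (fglob fs) x.
Proof.
move=> hd.
have -> : fglob fs = cst ((M%:R : K)^-1) * \sum_(m < M) (cst ((N%:R : K)^-1) * \sum_(j < N) fs m j).
  apply/funext => z; rewrite /fglob /fclient /= fct_sumE; congr (_ * _).
  by apply: eq_bigr => m _ /=; rewrite fct_sumE.
apply: differentiableM => //; apply: differentiable_sum => m.
apply: differentiableM => //; apply: differentiable_sum => j.
exact: hd.
Qed.

Lemma main_gen (K : realType) (d M N C R : nat)
  (fs : 'I_M -> 'I_N -> 'rV[K]_d -> K) (L mu theta : K)
  (coh : 'I_R -> 'I_C -> 'I_M) (pis : 'I_M -> {perm 'I_N})
  (xstar xt : 'rV[K]_d) (X : 'I_R -> 'I_C -> 'I_N -> 'rV[K]_d) :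
  (0 < N)%N -> (0 < C)%N -> (0 < R)%N -> M = (C * R)%N ->
  injective (fun p : 'I_R * 'I_C => coh p.1 p.2) ->
  (forall m j x, differentiable (fs m j) x) ->
  (forall m j, convex_fun (fs m j)) ->
  (forall m j, L_smooth L (fs m j)) ->
  strongly_convex mu (fglob fs) ->
  (forall x, fglob fs xstar <= fglob fs x) ->
  0 < theta ->
  - (2 * theta) * dotv
      ((R%:R)^-1 *: \sum_(r < R) ((C%:R)^-1 *: \sum_(c < C) ((N%:R)^-1 *:
          \sum_(j < N) grad (fs (coh r c) (pis (coh r c) j)) (X r c j))))
      (xt - xstar)
  <= - (theta * mu / 2) * sqnorm (xt - xstar)
     - theta * (fglob fs xt - fglob fs xstar) + theta * L *
     (((R * C * N)%:R)^-1 * \sum_(r < R) \sum_(c < C) \sum_(j < N)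
         sqnorm (xt - X r c j)).
Proof.
move=> N0 C0 R0 HM hinj hd hc hs hsc hmin th0.
have Nn : (N%:R : K) != 0 by rewrite pnatr_eq0 -lt0n.
have Cn : (C%:R : K) != 0 by rewrite pnatr_eq0 -lt0n.
have Rn : (R%:R : K) != 0 by rewrite pnatr_eq0 -lt0n.
set P := ((R * C * N)%:R : K)^-1.
have P0 : 0 <= P by rewrite invr_ge0 ler0n.
set G := fun (r : 'I_R) (c : 'I_C) (j : 'I_N) =>
  grad (fs (coh r c) (pis (coh r c) j)) (X r c j).
have EL : dotv ((R%:R)^-1 *: \sum_(r < R) ((C%:R)^-1 *: \sum_(c < C) ((N%:R)^-1 *:
          \sum_(j < N) G r c j))) (xt - xstar) =
   P * \sum_(r < R) \sum_(c < C) \sum_(j < N) dotv (G r c j) (xt - xstar).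
  rewrite /P dotvZl dotv_suml !natrM !invfM -!mulrA; congr (_ * _).
  rewrite mulr_sumr mulr_sumr; apply: eq_bigr => r _.
  rewrite dotvZl dotv_suml; congr (_ * _).
  rewrite mulr_sumr; apply: eq_bigr => c _.
  by rewrite dotvZl dotv_suml.
rewrite EL.
have key := fun r c j => @term K d (fs (coh r c) (pis (coh r c) j)) L xstar xt
   (X r c j) (hd _ _) (hc _ _) (hs _ _).
have S := @triple_le K _ _ _ _ _ key.
rewrite triple_lin in S.
have N1 : \sum_(r < R) \sum_(c < C) \sum_(j < N)
     - dotv (grad (fs (coh r c) (pis (coh r c) j)) (X r c j)) (xt - xstar) =
   - \sum_(r < R) \sum_(c < C) \sum_(j < N) dotv (G r c j) (xt - xstar).
  rewrite -sumrN; apply: eq_bigr => r _; rewrite -sumrN; apply: eq_bigr => c _.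
  by rewrite -sumrN.
have N2 : \sum_(r < R) \sum_(c < C) \sum_(j < N) L / 2 * sqnorm (xt - X r c j) =
   L / 2 * \sum_(r < R) \sum_(c < C) \sum_(j < N) sqnorm (xt - X r c j).
  rewrite mulr_sumr; apply: eq_bigr => r _; rewrite mulr_sumr; apply: eq_bigr => c _.
  by rewrite mulr_sumr.
have A1 := @avg_f K d M N C R fs coh pis xstar N0 C0 R0 HM hinj.
have B1 := @avg_f K d M N C R fs coh pis xt N0 C0 R0 HM hinj.
rewrite N1 N2 in S.
move: A1 B1 S; rewrite -/P.
set Sd := \sum_(r < R) \sum_(c < C) \sum_(j < N) dotv (G r c j) (xt - xstar).
set A := \sum_(r < R) \sum_(c < C) \sum_(j < N) fs (coh r c) (pis (coh r c) j) xstar.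
set B := \sum_(r < R) \sum_(c < C) \sum_(j < N) fs (coh r c) (pis (coh r c) j) xt.
set Q := \sum_(r < R) \sum_(c < C) \sum_(j < N) sqnorm (xt - X r c j).
move=> A1 B1 S.
have H1 : P * (- Sd) <= P * (A - B + L / 2 * Q) by rewrite ler_wpM2l.
have E1 : P * (A - B + L / 2 * Q) = fglob fs xstar - fglob fs xt + L / 2 * (P * Q).
  by rewrite -A1 -B1; ring.
rewrite E1 mulrN in H1.
have SC := hsc xstar xt.
have MF := @min_fo K d (fglob fs) xstar (xt - xstar) (@fglob_diff K d M N fs xstar hd) hmin.
rewrite sqnormN in SC.
have F1 : fglob fs xstar - fglob fs xt + mu / 2 * sqnorm (xt - xstar) <= 0 by lra.
set a := P * Sd in H1 *.
set V := P * Q in H1 *.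
set q := sqnorm (xt - xstar) in F1 *.
have T1 : theta * (- a) <= theta * (fglob fs xstar - fglob fs xt + L / 2 * V).
  by apply: ler_wpM2l; [exact: ltW|].
have T2 : theta * (fglob fs xstar - fglob fs xt + mu / 2 * q) <= theta * 0.
  by apply: ler_wpM2l; [exact: ltW|].
have : - (2 * theta) * a = 2 * (theta * (- a)) by ring.
move=> ->.
have : - (theta * mu / 2) * q - theta * (fglob fs xt - fglob fs xstar) + theta * L * V
  = 2 * (theta * (fglob fs xstar - fglob fs xt + L / 2 * V))
    - theta * (fglob fs xstar - fglob fs xt + mu / 2 * q) by field.
move=> ->.
move: T1 T2; rewrite mulr0.
set u := theta * (- a). set w := theta * (_ + L / 2 * V). set z := theta * (_ + mu / 2 * q).
lra.
Qed.

Theorem lemma9 (K : realType) (d M N C R : nat)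
  (fs : 'I_M -> 'I_N -> 'rV[K]_d -> K) (L mu gamma eta theta : K)
  (coh : nat -> nat -> 'I_C -> 'I_M) (pis : nat -> 'I_M -> {perm 'I_N})
  (x0 xstar : 'rV[K]_d) (t : nat) :
  (0 < N)%N -> (0 < C)%N -> (0 < R)%N -> M = (C * R)%N ->
  (forall s, injective (fun p : 'I_R * 'I_C => coh s p.1 p.2)) ->
  (forall m j x, differentiable (fs m j) x) ->
  (forall m j, convex_fun (fs m j)) ->
  (forall m j, L_smooth L (fs m j)) ->
  0 < mu -> strongly_convex mu (fglob fs) ->
  (forall x, fglob fs xstar <= fglob fs x) ->
  0 < gamma -> 0 < eta -> 0 < theta ->
  let xt := meta_iter R gamma eta fs coh pis x0 t in
  let xr (r : nat) := server_iter gamma eta fs (coh t) (pis t) xt r in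
  let xloc (r : nat) (m : 'I_M) (j : nat) :=
      loc_iter gamma fs (pis t m) m (xr r) j in
  let Vt := ((R * C * N)%:R)^-1 *
      \sum_(r < R) \sum_(c < C) \sum_(j < N)
         sqnorm (xt - xloc r (coh t r c) j) in
  - (2 * theta) * dotv
      ((R%:R)^-1 *: \sum_(r < R) ((C%:R)^-1 *: \sum_(c < C) ((N%:R)^-1 *:
          \sum_(j < N) grad (fs (coh t r c) (pis t (coh t r c) j))
                             (xloc r (coh t r c) j))))
      (xt - xstar)
  <= - (theta * mu / 2) * sqnorm (xt - xstar)
     - theta * (fglob fs xt - fglob fs xstar) + theta * L * Vt.
Proof.
move=> N0 C0 R0 HM hinj hd hc hs mu0 hsc hmin g0 e0 th0.
exact: (@main_gen K d M N C R fs L mu theta (coh t) (pis t) xstar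
  (meta_iter R gamma eta fs coh pis x0 t)
  (fun r c j => loc_iter gamma fs (pis t (coh t r c)) (coh t r c)
     (server_iter gamma eta fs (coh t) (pis t) (meta_iter R gamma eta fs coh pis x0 t) r) j)
  N0 C0 R0 HM (hinj t) hd hc hs hsc hmin th0).
Qed.
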